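(* Let $\alpha,\beta,\gamma\in\mathbb{Z}[i]$ satisfy $\alpha^2+i\beta^2+(1+i)\gamma^2=0$, $\alpha\beta\gamma\neq0$ and $\gcd(\alpha,\beta,\gamma)\in U$. Then $\alpha\beta\gamma\not\equiv0\pmod{1+i}$.
   Context: $\mathbb{Z}[i]$ is the ring of Gaussian integers, $U=\{1,-1,i,-i\}$ its unit group; $\gcd(\alpha,\beta,\gamma)\in U$ means no common non-unit divisor. *)

(* Defs.v *)
(* Gaussian integers Z[i] realized as the subring
   {z in algC | Re z, Im z integers} of the algebraic complex numbers algC. *)
From mathcomp Require Import all_boot all_order all_algebra all_field.
Set Implicit Arguments. Unset Strict Implicit. Unset Printing Implicit Defensive.
Import Order.TTheory GRing.Theory Num.Theory.
Local Open Scope ring_scope.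

Definition gaussInt (z : algC) : bool :=
  ('Re z \is a Num.int) && ('Im z \is a Num.int).

Definition gdvd (d x : algC) : Prop :=
  exists2 q : algC, gaussInt q & x = d * q.

(* a Gaussian integer u is a unit of Z[i] (i.e. u ∈ U = {1,-1,i,-i}) iff u | 1 *)
Definition gunit (u : algC) : Prop := gaussInt u /\ gdvd u 1.

(* gcd(a,b,c) ∈ U: every common Gaussian-integer divisor is a unit *)
Definition gcoprime3 (a b c : algC) : Prop :=
  forall d : algC, gaussInt d -> gdvd d a -> gdvd d b -> gdvd d c -> gunit d.

(* Main.v *)
Require Import Defs.
From mathcomp Require Import all_boot all_order all_algebra all_field.
From mathcomp Require Import ring lra zify.
Import Order.TTheory GRing.Theory Num.Theory.
Local Open Scope ring_scope.

Definition toC (p : int * int) : algC := p.1%:~R + 'i * p.2%:~R.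
Definition pm (p q : int * int) : int * int :=
  (p.1 * q.1 - p.2 * q.2, p.1 * q.2 + p.2 * q.1).
Definition pa (p q : int * int) : int * int := (p.1 + q.1, p.2 + q.2).

Lemma mulrect (x y u v : algC) : (x + 'i*y) * (u + 'i*v) = (x*u - y*v) + 'i*(x*v + y*u).
Proof. have h : 'i ^+ 2 = -1 :> algC := sqrCi _.
have e : (x + 'i*y) * (u + 'i*v) - ((x*u - y*v) + 'i*(x*v + y*u)) = ('i^+2 + 1) * (y * v) by ring.
by apply/eqP; rewrite -subr_eq0 e h addNr mul0r.
Qed.

Lemma toCM p q : toC p * toC q = toC (pm p q).
Proof. by rewrite /toC /pm /= mulrect !(intrD, intrN, intrM). Qed.

Lemma toCD p q : toC p + toC q = toC (pa p q).
Proof. case: p q => [x y] [u v]; rewrite /toC /pa /= !intrD mulrDr; ring. Qed.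

Lemma toC_inj p q : toC p = toC q -> p = q.
Proof.
case: p q => [x y] [u v]; rewrite /toC /= => e.
have r := congr1 (fun z : algC => 'Re z) e.
have i := congr1 (fun z : algC => 'Im z) e.
rewrite /= !Re_rect ?Rreal_int ?intr_int // in r.
rewrite /= !Im_rect ?Rreal_int ?intr_int // in i.
by move/intr_inj: r => ->; move/intr_inj: i => ->.
Qed.

Arguments toC_inj {p q}.
Lemma gi_toC z : gaussInt z -> exists p, z = toC p.
Proof.
case/andP => /intrP [x hx] /intrP [y hy]; exists (x, y).
by rewrite /toC /= -hx -hy -algCrect.
Qed.

Arguments gi_toC {z}.
Lemma toC_gi p : gaussInt (toC p).
Proof.
rewrite /gaussInt /toC Re_rect ?Im_rect ?Rreal_int ?intr_int //.
Qed.

Lemma toC1 : 1 = toC (1, 0).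
Proof. by rewrite /toC /= mulr0 addr0. Qed.
Lemma toCi : 'i = toC (0, 1).
Proof. by rewrite /toC /= mulr1 add0r. Qed.
Lemma toC0 : 0 = toC (0, 0).
Proof. by rewrite /toC /= mulr0 addr0. Qed.

Lemma par (m : int) : (exists k, m = 2 * k) \/ (exists k, m = 2 * k + 1).
Proof.
have e := divz_eq m 2.
have h0 : (0 <= m %% 2)%Z by apply: modz_ge0.
have h1 : (m %% 2 < 2)%Z by apply: ltz_pmod.
have [z|o] : (m %% 2 = 0 \/ m %% 2 = 1)%Z by lia.
  by left; exists (m %/ 2)%Z; lia.
by right; exists (m %/ 2)%Z; lia.
Qed.

Definition zm (p q : 'Z_2 * 'Z_2) : 'Z_2 * 'Z_2 :=
  (p.1 * q.1 - p.2 * q.2, p.1 * q.2 + p.2 * q.1).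
Definition zs (p q : 'Z_2 * 'Z_2) : 'Z_2 * 'Z_2 := (p.1 + q.1, p.2 + q.2).
Definition phi2 (p : int * int) : 'Z_2 * 'Z_2 := (p.1%:~R, p.2%:~R).

Lemma phiM p q : phi2 (pm p q) = zm (phi2 p) (phi2 q).
Proof. by rewrite /phi2 /pm /zm /= !(intrD, intrN, intrM). Qed.
Lemma phiD p q : phi2 (pa p q) = zs (phi2 p) (phi2 q).
Proof. by rewrite /phi2 /pa /zs /= !intrD. Qed.
Lemma phi01 : phi2 (0, 1) = (0, 1).
Proof. by rewrite /phi2 /=. Qed.
Lemma phi11 : phi2 (1, 1) = (1, 1).
Proof. by rewrite /phi2 /=. Qed.
Lemma phi10 : phi2 (1, 0) = (1, 0).
Proof. by rewrite /phi2 /=. Qed.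
Lemma phi00 : phi2 (0, 0) = (0, 0).
Proof. by rewrite /phi2 /=. Qed.

Lemma z2 (A B C Q : 'Z_2 * 'Z_2) :
  zs (zs (zm A A) (zm (0,1) (zm B B))) (zm (zs (1,0) (0,1)) (zm C C)) = (0, 0) ->
  zm (zm A B) C = zm (zs (1,0) (0,1)) Q ->
  [&& A.1 + A.2 == 0, B.1 + B.2 == 0 & C.1 + C.2 == 0].
Proof.
case: A B C Q => [ua va] [ub vb] [uc vc] [uq vq].
move: ua va ub vb uc vc uq vq.
by do 8![case=> [[|[|//]] ?]].
Qed.

Arguments z2 {A B C Q}.
Lemma ev_div (A : int * int) : (A.1 + A.2)%:~R = 0 :> 'Z_2 -> gdvd (1 + 'i) (toC A).
Proof.
case: A => x y /=; case: (par (x + y)) => [[k hk]|[k hk]] h.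
  exists (toC (k, k - x)); first exact: toC_gi.
  rewrite toC1 toCi toCD toCM; congr toC; rewrite /pm /pa /=; congr pair; lia.
move: h; rewrite hk intrD intrM.
move: (k%:~R : 'Z_2) => t.
by case: t => [[|[|//]] ?].
Qed.

Lemma not_unit : ~ gunit (1 + 'i).
Proof.
case=> _ [q gq e]; case: (gi_toC gq) => Q hQ; subst q; clear gq.
move: e; rewrite !toC1 toCi toCD toCM => /toC_inj.
case: Q => u v; rewrite /pm /pa /= => [[]]; lia.
Qed.

Theorem lemma4p16 (a b c : algC) :
  gaussInt a -> gaussInt b -> gaussInt c ->
  a ^+ 2 + 'i * b ^+ 2 + (1 + 'i) * c ^+ 2 = 0 ->
  a * b * c != 0 ->
  gcoprime3 a b c ->
  ~ gdvd (1 + 'i) (a * b * c).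
Proof.
move=> ga gb gc E _ cop [q gq e].
case: (gi_toC ga) => A ?; case: (gi_toC gb) => B ?; case: (gi_toC gc) => C ?; subst a b c; clear ga gb gc.
case: (gi_toC gq) => Q ?; subst q; clear gq.
move: E; rewrite !expr2 toCi toC1 !(toCM, toCD) toC0 => /toC_inj E.
move: e; rewrite toCi toC1 !(toCM, toCD) => /toC_inj e.
have E2 := congr1 phi2 E; have e2 := congr1 phi2 e.
rewrite !(phiM, phiD, phi01, phi10, phi00) in E2 e2.
case/and3P: (z2 E2 e2) => /eqP ha /eqP hb /eqP hc.
apply: not_unit; apply: cop.
- by rewrite toC1 toCi toCD; exact: toC_gi.
- by apply: ev_div; rewrite intrD.
- by apply: ev_div; rewrite intrD.
- by apply: ev_div; rewrite intrD.
Qed.
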